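(* Let $\mu$ be a partition of $k$. Then, as functions on Young diagrams, $\mathrm{Ko}^{(\alpha)}_\mu=\sum_{\nu\vdash k}\frac{L_{\nu,\mu}}{z_\nu}\,\mathrm{Ch}^{(\alpha)}_\nu .$ In particular $\mathrm{Ko}^{(\alpha)}_\mu$ is an $\alpha$-shifted symmetric function.
   Context: $J^{(\alpha)}_\lambda$ is the Jack symmetric function in Macdonald's $J$-normalization. Write $J^{(\alpha)}_\lambda=\sum_{\tau\vdash|\lambda|}\widehat K^{\lambda,(\alpha)}_\tau M_\tau$ (monomial basis) and $J^{(\alpha)}_\lambda=\sum_{\tau\vdash|\lambda|}\theta^{(\alpha)}_\tau(\lambda)\,\mathrm p_\tau$ (power-sum basis). The numbers $L_{\nu,\mu}$ are defined by $\mathrm p_\nu=\sum_{\mu\vdash k}L_{\nu,\mu}M_\mu$ for $\nu\vdash k$. For a partition $\mu$ with $m_i=m_i(\mu)$ parts equal to $i$, $z_\mu=\prod_i i^{m_i}m_i!$. For $\mu\vdash k$ and $|\lambda|=n$ ($\mu1^{n-k}$ is $\mu$ with $n-k$ parts $1$ appended): $\mathrm{Ko}^{(\alpha)}_\mu(\lambda)=\widehat K^{\lambda,(\alpha)}_{\mu1^{n-k}}/(n-k)!$ if $n\ge k$, $0$ otherwise; $\mathrm{Ch}^{(\alpha)}_\mu(\lambda)=\binom{n-k+m_1(\mu)}{m_1(\mu)}\,z_\mu\,\theta^{(\alpha)}_{\mu1^{n-k}}(\lambda)$ if $n\ge k$, $0$ otherwise. An $\alpha$-shifted symmetric function is a sequence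 $F=(F_N)_{N\ge1}$, $F_N\in\mathbb Q(\alpha)[x_1,\dots,x_N]$ symmetric in $x_1-1/\alpha,\dots,x_N-N/\alpha$, with $F_{N+1}(x_1,\dots,x_N,0)=F_N(x_1,\dots,x_N)$ and bounded degrees; it is viewed as a function on Young diagrams via $F(\lambda)=F_\ell(\lambda_1,\dots,\lambda_\ell)$ for $\lambda$ with $\ell$ rows. It is known that each $\mathrm{Ch}^{(\alpha)}_\nu$ is $\alpha$-shifted symmetric. *)

(* Defs.v *)
From HB Require Import structures.
From mathcomp Require Import all_boot all_order all_algebra all_fingroup.
From mathcomp Require Import fraction.
Set Implicit Arguments. Unset Strict Implicit. Unset Printing Implicit Defensive.
Import Order.TTheory GRing.Theory Num.Theory.
Local Open Scope ring_scope.

Definition Qa : fieldType := {fraction {poly rat}}.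
Definition alpha : Qa := tofrac ('X : {poly rat}).

Definition is_partition (s : seq nat) : bool :=
  sorted geq s && all (fun x => 0 < x)%N s.

(* All partitions of k (each listed once): every partition of k has at most
   k parts, each at most k, hence is obtained from some f : 'I_k -> 'I_k.+1
   by dropping zero entries. *)
Definition partitions (k : nat) : seq (seq nat) :=
  [seq s <- undup [seq [seq (val (f i)) | i <- enum 'I_k & (0 < val (f i))%N]
                   | f : {ffun 'I_k -> 'I_k.+1}]
     | is_partition s && (sumn s == k)].

Definition mult (i : nat) (mu : seq nat) : nat := count_mem i mu.

Definition zee (mu : seq nat) : nat :=
  \prod_(i <- undup mu) (i ^ mult i mu * (mult i mu)`!)%N.

Definition dominated (tau lam : seq nat) : bool :=
  [forall i : 'I_(size tau + size lam).+1,
     (sumn (take i tau) <= sumn (take i lam))%N].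

(* L_{nu,mu}: coefficient of m_mu in p_nu, i.e. the coefficient of
   x_1^{mu_1} ... x_l^{mu_l} in prod_i (sum_j x_j^{nu_i}). *)
Definition Lc (nu mu : seq nat) : nat :=
  #|[set f : {ffun 'I_(size nu) -> 'I_(size mu)} |
      [forall j : 'I_(size mu),
         (\sum_(i | f i == j) nth 0 nu i)%N == nth 0 mu j]]|.

Definition add_ones (mu : seq nat) (j : nat) : seq nat := mu ++ nseq j 1%N.

(* A family theta : lam -> tau -> Q(alpha) is read as
   J_lam = sum_{tau |- |lam|} theta lam tau * p_tau (power-sum expansion).
   Its monomial coefficients are then Khat lam tau = sum_nu theta lam nu L_{nu,tau}. *)
Definition Khat (theta : seq nat -> seq nat -> Qa) (lam tau : seq nat) : Qa :=
  \sum_(nu <- partitions (sumn lam)) theta lam nu * (Lc nu tau)%:R.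

(* Characterization of Jack symmetric functions in Macdonald's J-normalization:
   (i) J_lam = sum_{tau <= lam} Khat m_tau (triangularity in dominance order),
   (ii) <J_lam, J_rho>_alpha = 0 for lam <> rho, where
        <p_nu, p_rho>_alpha = delta_{nu rho} z_nu alpha^{l(nu)},
   (iii) the coefficient of m_{1^n} in J_lam is n!.
   These determine J_lam uniquely (Macdonald, Ch. VI, Sect. 10). *)
Definition IsJack (theta : seq nat -> seq nat -> Qa) : Prop :=
  forall lam : seq nat, is_partition lam ->
    let n := sumn lam in
    [/\ forall tau, tau \in partitions n -> ~~ dominated tau lam ->
          Khat theta lam tau = 0,
        Khat theta lam (nseq n 1%N) = (n`!)%:R
      & forall rho, is_partition rho -> sumn rho = n -> rho != lam ->
          \sum_(nu <- partitions n)
             theta lam nu * theta rho nu * (zee nu)%:R * alpha ^+ size nu = 0].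

Definition Ko (theta : seq nat -> seq nat -> Qa) (mu lam : seq nat) : Qa :=
  let n := sumn lam in let k := sumn mu in
  if (k <= n)%N then Khat theta lam (add_ones mu (n - k)) / ((n - k)`!)%:R
  else 0.

Definition Ch (theta : seq nat -> seq nat -> Qa) (mu lam : seq nat) : Qa :=
  let n := sumn lam in let k := sumn mu in
  if (k <= n)%N then
    ('C(n - k + mult 1 mu, mult 1 mu))%:R * (zee mu)%:R
      * theta lam (add_ones mu (n - k))
  else 0.

Definition polyfun_deg (N d : nat) (f : seq Qa -> Qa) : Prop :=
  exists terms : seq (Qa * seq nat),
    (forall t, t \in terms -> (sumn t.2 <= d)%N) /\
    forall x : seq Qa, size x = N ->
      f x = \sum_(t <- terms) t.1 * \prod_(i < N) (nth 0 x i) ^+ (nth 0%N t.2 i).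

(* y_i = x_i - i/alpha (1-based i); permuting the y's. *)
Definition shift_perm (N : nat) (s : 'S_N) (x : seq Qa) : seq Qa :=
  [seq nth 0 x (s i) - ((s i).+1)%:R / alpha + (i.+1)%:R / alpha
     | i <- enum 'I_N].

(* G (a function on Young diagrams) is alpha-shifted symmetric: there is a
   sequence (F_N)_{N>=1} of polynomial functions of bounded degree, each
   symmetric in x_1 - 1/alpha, ..., x_N - N/alpha, stable under
   F_{N+1}(x,0) = F_N(x), with G(lam) = F_l(lam_1..lam_l) (l = #rows; we
   evaluate at F_{l+1}(lam,0), which equals it by stability and also covers
   the empty diagram). *)
Definition shifted_symmetric (G : seq nat -> Qa) : Prop :=
  exists F : nat -> seq Qa -> Qa,
    [/\ exists d, forall N, (0 < N)%N -> polyfun_deg N d (F N),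
        forall N (s : 'S_N) (x : seq Qa), (0 < N)%N -> size x = N ->
          F N (shift_perm s x) = F N x,
        forall N (x : seq Qa), (0 < N)%N -> size x = N ->
          F N.+1 (rcons x 0) = F N x
      & forall lam, is_partition lam ->
          G lam = F (size lam).+1 (rcons [seq (i%:R : Qa) | i <- lam] 0)].

(* Main.v *)
Require Import Defs.
From HB Require Import structures.
From mathcomp Require Import all_boot all_order all_algebra all_fingroup.
From mathcomp Require Import fraction.
From mathcomp Require Import zify ring.
Import Order.TTheory GRing.Theory Num.Theory.
Set Implicit Arguments. Unset Strict Implicit. Unset Printing Implicit Defensive.

Fixpoint Lr (m : nat) (nu t : seq nat) : nat :=
  match nu with
  | [::] => all (fun j => nth 0 t j == 0) (iota 0 m)
  | a :: nu' => \sum_(0 <= j < m)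
       (a <= nth 0 t j) * Lr m nu' (set_nth 0 t j (nth 0 t j - a))
  end.

Lemma Lr_swap m a b s t : Lr m [:: a, b & s] t = Lr m [:: b, a & s] t.
Proof.
simpl Lr.
under eq_bigr => i _ do rewrite big_distrr /=.
under [RHS]eq_bigr => i _ do rewrite big_distrr /=.
rewrite [LHS]exchange_big_nat.
apply: eq_big_nat => i _; apply: eq_big_nat => j _.
rewrite !nth_set_nth /=.
rewrite [in LHS]set_set_nth.
case: (eqVneq j i) => [->|nij].
  rewrite set_set_nth eqxx subnAC !mulnA; congr (_ * _).
  rewrite !mulnb; set x := nth 0 t i.
  have E : forall a b, (a <= x) && (b <= x - a) = (a + b <= x).
    by move=> c d; apply/idP/idP => [/andP[h1 h2]|h]; [lia| apply/andP; split; lia].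
  by rewrite E E addnC.
by rewrite mulnCA.
Qed.

Lemma Lr_rem m x s t : x \in s -> Lr m s t = Lr m (x :: rem x s) t.
Proof.
elim: s t => [//|y s IH] t; rewrite inE.
case: (eqVneq y x) => [->|nyx]; first by rewrite [rem _ _]/= eqxx.
move=> xs; rewrite [rem _ _]/= (negbTE nyx) -Lr_swap.
by rewrite [LHS]/= [RHS]/=; apply: eq_bigr => i _; rewrite (IH _ xs).
Qed.

Lemma Lr_perm m s1 s2 t : perm_eq s1 s2 -> Lr m s1 t = Lr m s2 t.
Proof.
elim: s1 s2 t => [|x s1 IH] s2 t.
  by move=> /perm_size; case: s2.
move=> p; have xs2 : x \in s2 by rewrite -(perm_mem p) mem_head.
rewrite (Lr_rem m t xs2) /=; apply: eq_bigr => i _; congr (_ * _); apply: IH.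
by rewrite -(perm_cons x); apply: perm_trans p (perm_to_rem xs2).
Qed.

Lemma Lr_nil m t : Lr m [::] t = all (fun j => nth 0 t j == 0) (iota 0 m).
Proof. by []. Qed.
Lemma Lr_cons m a nu t : Lr m (a :: nu) t = \sum_(0 <= j < m)
       (a <= nth 0 t j) * Lr m nu (set_nth 0 t j (nth 0 t j - a)).
Proof. by []. Qed.

Lemma iotaS0 m : iota 0 m.+1 = iota 0 m ++ [:: m].
Proof. by rewrite -addn1 iotaD. Qed.

Definition posl (r : seq nat) := all (fun x => 0 < x)%N r.

Lemma Lr_drop0 m r t : posl r -> Lr m.+1 r (set_nth 0 t m 0) = Lr m r t.
Proof.
elim: r t => [|a r IH] t.
  move=> _; rewrite !Lr_nil iotaS0 all_cat /= nth_set_nth /= eqxx andbT.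
  congr nat_of_bool; rewrite ?eqxx ?andbT; apply: eq_in_all => i; rewrite mem_iota add0n => /andP[_ him].
  by rewrite nth_set_nth /= (ltn_eqF him).
move=> /andP[apos rpos].
rewrite !Lr_cons big_nat_recr //= nth_set_nth /= eqxx.
have -> : (a <= 0) = false by case: a apos.
rewrite mul0n addn0; apply: eq_big_nat => j /andP[_ jm].
rewrite nth_set_nth /= (ltn_eqF jm) set_set_nth (gtn_eqF jm) IH //.
Qed.

Lemma Lr_rem1 m r t : posl r -> nth 0 t m = 1 ->
  Lr m.+1 r t = count_mem 1 r * Lr m (rem 1 r) t.
Proof.
elim: r t => [|a r IH] t.
  move=> _ tm1; rewrite [Lr m.+1 _ _]Lr_nil iotaS0 all_cat /= tm1 /= andbF mul0n; reflexivity.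
move=> /andP[apos rpos] tm1.
rewrite Lr_cons big_nat_recr //= tm1.
have E : forall j, j < m -> nth 0 (set_nth 0 t j (nth 0 t j - a)) m = 1.
  by move=> j jm; rewrite nth_set_nth /= (gtn_eqF jm).
under eq_big_nat => j /andP[_ jm] do rewrite (IH _ rpos (E j jm)) mulnCA.
rewrite -big_distrr /=.
have -> : \sum_(0 <= i < m) (a <= nth 0 t i) *
     Lr m (rem 1 r) (set_nth 0 t i (nth 0 t i - a)) = Lr m (a :: rem 1 r) t by [].
clear E; case: (eqVneq a 1) => [a1|an1].
  subst a; rewrite subnn Lr_drop0 //.
  have [c0|cpos] := posnP (count_mem 1 r); first by rewrite c0.
  rewrite -(Lr_perm _ _ (perm_to_rem _)); last by rewrite -has_pred1 has_count.
  by rewrite /= mul1n add1n mulSn addnC.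
have -> : (a <= 1) = false by case: a apos an1 => [|[|]].
by rewrite mul0n addn0.
Qed.

Lemma rem1_facts r : 1 \in r -> posl r ->
  posl (rem 1 r) /\ count_mem 1 r = (count_mem 1 (rem 1 r)).+1.
Proof.
move=> r1 pr; have p := perm_to_rem r1.
split; first by move: pr; rewrite /posl (perm_all _ p) => /andP[].
by rewrite (seq.permP p).
Qed.

Lemma Lr_ones j m r t : posl r -> (forall i, m <= i < m + j -> nth 0 t i = 1) ->
  Lr (m + j) (r ++ nseq j 1) t = (count_mem 1 r + j) ^_ j * Lr m r t.
Proof.
elim: j => [|j IH] pr ht; first by rewrite addn0 cats0 ffactn0 mul1n.
have p : perm_eq (r ++ nseq j.+1 1) (1 :: (r ++ nseq j 1)).
  by rewrite -[nseq j.+1 1]/([:: 1] ++ nseq j 1) perm_catCA.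
rewrite (Lr_perm _ _ p) addnS Lr_rem1.
- have -> : rem 1 (1 :: (r ++ nseq j 1)) = r ++ nseq j 1 by [].
  rewrite IH //; last by move=> i /andP[h1 h2]; apply: ht; rewrite h1 /=; lia.
  rewrite /= count_cat count_nseq /= mul1n addnS ffactSS; ring.
- suff : posl ([:: 1] ++ r ++ nseq j 1) by [].
  rewrite /posl !all_cat; apply/and3P; split => //; apply/allP => x /nseqP[-> _] //.
- by apply: ht; lia.
Qed.

Lemma Lr_ones0 j m r t : posl r -> (forall i, m <= i < m + j -> nth 0 t i = 1) ->
  count_mem 1 r < j -> Lr (m + j) r t = 0.
Proof.
elim: j r => [//|j IH] r pr ht cj.
rewrite addnS Lr_rem1 //; last by apply: ht; lia.
have [c0|cpos] := posnP (count_mem 1 r); first by rewrite c0.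
have r1 : 1 \in r by rewrite -has_pred1 has_count.
have [pr' ce] := rem1_facts r1 pr.
rewrite IH ?muln0 //; last by rewrite ce in cj.
by move=> i /andP[h1 h2]; apply: ht; rewrite h1 /=; lia.
Qed.

Definition consf n m (x : 'I_m) (g : {ffun 'I_n -> 'I_m}) : {ffun 'I_n.+1 -> 'I_m} :=
  [ffun i => if unlift ord0 i is Some i' then g i' else x].

Lemma sum_ffunS n m (F : {ffun 'I_n.+1 -> 'I_m} -> nat) :
  \sum_f F f = \sum_(x : 'I_m) \sum_(g : {ffun 'I_n -> 'I_m}) F (consf x g).
Proof.
rewrite (pair_bigA _ (fun x g => F (consf x g))) /=.
rewrite (reindex (fun p : 'I_m * {ffun 'I_n -> 'I_m} => consf p.1 p.2)) //.
exists (fun f : {ffun 'I_n.+1 -> 'I_m} => (f ord0, [ffun i : 'I_n => f (lift ord0 i)])) => [[x g] _|f _] /=.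
  congr pair; first by rewrite ffunE unlift_none.
  by apply/ffunP => i; rewrite !ffunE liftK.
apply/ffunP => i; rewrite !ffunE.
by case: unliftP => [j ->|->]; rewrite ?ffunE.
Qed.

Lemma Lc_gen nu m t :
  \sum_(f : {ffun 'I_(size nu) -> 'I_m})
     ([forall j : 'I_m, (\sum_(i | f i == j) nth 0 nu i) == nth 0 t j] : nat)
  = Lr m nu t.
Proof.
elim: nu t => [|a nu IH] t.
  rewrite Lr_nil.
  under eq_bigr => f _ do under eq_forallb => j do rewrite big_ord0.
  rewrite sum_nat_const card_ffun !card_ord expn0 mul1n.
  congr nat_of_bool; apply/forallP/allP => [h i|h j].
    by rewrite mem_iota /= => im; have := h (Ordinal im); rewrite eq_sym.
  by rewrite eq_sym; apply: h; rewrite mem_iota /=.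
rewrite Lr_cons big_mkord sum_ffunS; apply: eq_bigr => x _.
rewrite -IH big_distrr /=; apply: eq_bigr => g _.
rewrite mulnb; congr nat_of_bool.
have S : forall j : 'I_m, \sum_(i < (size nu).+1 | consf x g i == j) nth 0 (a :: nu) i
    = (x == j) * a + \sum_(i < size nu | g i == j) nth 0 nu i.
  move=> j; rewrite big_mkcond big_ord_recl /= [in RHS]big_mkcond /=.
  rewrite ffunE unlift_none mulnbl; congr (_ + _).
  by apply: eq_bigr => i _; rewrite ffunE liftK.
apply/forallP/andP => [h|[ha h] j].
  have hx := h x; rewrite S eqxx mul1n in hx; move/eqP: hx => hx.
  split; first by rewrite -hx leq_addr.
  apply/forallP => j; rewrite nth_set_nth /=.
  case: (eqVneq (val j) (val x)) => [/val_inj ->|njx].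
    by rewrite -hx addKn.
  have := h j; rewrite S.
  have -> : (x == j) = false by apply/negbTE; apply: contra njx => /eqP ->.
  by rewrite mul0n add0n.
move/forallP: h => /(_ j); rewrite S nth_set_nth /=.
case: (eqVneq x j) => [<-|nxj]; first by rewrite eqxx mul1n => /eqP ->; rewrite subnKC.
by rewrite mul0n add0n (_ : (val j == val x) = false) //; apply/negbTE; apply: contra nxj => /eqP/val_inj ->.
Qed.

Lemma Lc_Lr nu mu : Lc nu mu = Lr (size mu) nu mu.
Proof.
rewrite /Lc -Lc_gen -sum1dep_card big_mkcond /=.
by apply: eq_bigr => f _; case: ifP.
Qed.

Lemma nth_le_sumn (s : seq nat) i : nth 0 s i <= sumn s.
Proof.
elim: s i => [|x s IH] [|i] //=; first exact: leq_addr.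
by apply: leq_trans (IH i) _; exact: leq_addl.
Qed.

Lemma size_le_sumn (s : seq nat) : posl s -> size s <= sumn s.
Proof.
elim: s => [//|x s IH] /andP[xp sp] /=.
by rewrite -add1n leq_add // IH.
Qed.

Lemma mem_partitions n s : (s \in partitions n) = is_partition s && (sumn s == n).
Proof.
rewrite /partitions mem_filter andbC; apply/andP/idP => [[] //|h].
split=> //; rewrite mem_undup; apply/mapP.
case/andP: h => /andP[_ sp] /eqP sn.
have hle : forall i, nth 0 s i < n.+1 by move=> i; rewrite ltnS -sn nth_le_sumn.
exists [ffun i : 'I_n => inord (nth 0 s i) : 'I_n.+1]; first by rewrite mem_enum.
under eq_filter => i do rewrite ffunE /= inordK //.
under eq_map => i do rewrite ffunE /= inordK //.
rewrite (_ : [seq nth 0 s i | i : 'I_n <- enum 'I_n & 0 < nth 0 s i] =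
   [seq nth 0 s i | i <- [seq i <- map val (enum 'I_n) | 0 < nth 0 s i]]); last first.
  by rewrite filter_map -map_comp.
rewrite val_enum_ord.
have hs : size s <= n by rewrite -sn size_le_sumn.
rewrite -(subnKC hs) iotaD filter_cat map_cat.
have -> : [seq x <- iota (0 + size s) (n - size s) | 0 < nth 0 s x] = [::].
  rewrite (@eq_in_filter _ _ pred0) ?filter_pred0 // => x.
  by rewrite mem_iota add0n => /andP[hx _]; rewrite nth_default.
rewrite cats0 (_ : filter _ _ = iota 0 (size s)); first exact/esym/(mkseq_nth 0 s).
apply/all_filterP/allP => x; rewrite mem_iota add0n => hx.
by move/allP: sp; apply; rewrite mem_nth.
Qed.

Lemma uniq_partitions n : uniq (partitions n).
Proof. by rewrite /partitions filter_uniq // undup_uniq. Qed.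

Lemma geq_trans : transitive geq.
Proof. by move=> b a c h1 h2; apply: leq_trans h2 h1. Qed.

Lemma path_nseq1 x j : 1 <= x -> path geq x (nseq j 1).
Proof. by elim: j x => [//|j IH] x hx /=; rewrite hx IH. Qed.

Lemma part_add_ones nu j : is_partition nu -> is_partition (add_ones nu j).
Proof.
case/andP=> so po; apply/andP; split; last first.
  by rewrite /add_ones all_cat po /=; apply/allP => x /nseqP[-> _].
rewrite /add_ones; case: nu so po => [|x r] so po /=.
  by case: j => //= j; rewrite path_nseq1.
rewrite cat_path; apply/andP; split => //; apply: path_nseq1.
have : last x r \in x :: r by rewrite mem_last.
by move/allP: po => po /po.
Qed.

Lemma add_ones_inj j : injective (add_ones^~ j).
Proof.
move=> a b; rewrite /add_ones => e; have sz : size a = size b.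
  by move/(congr1 size): e; rewrite !size_cat => /addIn.
by rewrite -[a](take_size_cat (nseq j 1) (erefl _)) e take_size_cat.
Qed.

Lemma part_decomp rho j : is_partition rho -> j <= count_mem 1 rho ->
  exists2 nu, is_partition nu & rho = add_ones nu j.
Proof.
elim: rho j => [|x r IH] j.
  by move=> _; rewrite leqn0 => /eqP ->; exists [::].
case/andP=> so /andP[xp rp].
have sr : sorted geq r := path_sorted so.
have ax : all (geq x) r := order_path_min geq_trans so.
case: (eqVneq x 1) => [x1|xn1].
  subst x.
  have r1 : all (pred1 1) r.
    apply/allP => y yr; move/allP: ax => /(_ y yr); move/allP: rp => /(_ y yr).
    by rewrite /= eqn_leq => -> ->.
  move/all_pred1P: r1 => -> /=.
  rewrite count_nseq /= mul1n add1n => hj.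
  exists (nseq ((size r).+1 - j) 1).
    by rewrite /is_partition; apply/andP; split;
      [case: (_ - _) => //= k; rewrite path_nseq1 | apply/allP => y /nseqP[-> _]].
  by rewrite /add_ones -nseqD subnK.
rewrite /= (negbTE (xn1 : x != 1)) add0n => hj.
have [nu pnu er] := IH j (introT andP (conj sr rp)) hj.
rewrite er in so *.
exists (x :: nu) => //.
case/andP: pnu => snu pnu; apply/andP; split; last by rewrite /= xp.
move: so; rewrite /add_ones => so.
by have := so : path geq x (nu ++ nseq j 1); rewrite cat_path => /andP[].
Qed.

Lemma perm_parts k j :
  perm_eq [seq rho <- partitions (k + j) | j <= count_mem 1 rho]
          (map (add_ones^~ j) (partitions k)).
Proof.
apply: uniq_perm.
- by rewrite filter_uniq // uniq_partitions.
- by rewrite (map_inj_uniq (@add_ones_inj j)) uniq_partitions.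
move=> rho; rewrite mem_filter mem_partitions; apply/idP/mapP.
  case/andP=> hj /andP[prho /eqP srho].
  have [nu pnu e] := part_decomp prho hj.
  exists nu => //; rewrite mem_partitions pnu /=.
  by move: srho; rewrite e /add_ones sumn_cat sumn_nseq mul1n => /addIn ->.
case=> nu; rewrite mem_partitions => /andP[pnu /eqP snu] ->.
rewrite part_add_ones //= /add_ones sumn_cat sumn_nseq snu mul1n eqxx andbT.
by rewrite count_cat count_nseq /= mul1n leq_addl.
Qed.

Lemma Lr_ext m r t t' : (forall i, i < m -> nth 0 t i = nth 0 t' i) ->
  Lr m r t = Lr m r t'.
Proof.
elim: r t t' => [|a r IH] t t' h.
  rewrite !Lr_nil; congr nat_of_bool; apply: eq_in_all => i.
  by rewrite mem_iota add0n => /andP[_ /h ->].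
rewrite !Lr_cons; apply: eq_big_nat => j /andP[_ jm]; rewrite h //.
congr (_ * _); apply: IH => i im; rewrite !nth_set_nth /= h //.
Qed.

Lemma Lc_add_ones nu mu j : is_partition nu ->
  Lc (add_ones nu j) (add_ones mu j) = (count_mem 1 nu + j) ^_ j * Lc nu mu.
Proof.
case/andP=> _ pnu.
rewrite !Lc_Lr /add_ones size_cat size_nseq Lr_ones //.
  congr (_ * _); apply: Lr_ext => i im; rewrite nth_cat im //.
move=> i /andP[h1 h2]; rewrite nth_cat ltnNge h1 /= nth_nseq; case: ifP => //; lia.
Qed.

Lemma Lc_add_ones0 rho mu j : is_partition rho -> count_mem 1 rho < j ->
  Lc rho (add_ones mu j) = 0.
Proof.
case/andP=> _ pr hc.
rewrite Lc_Lr /add_ones size_cat size_nseq Lr_ones0 //.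
move=> i /andP[h1 h2]; rewrite nth_cat ltnNge h1 /= nth_nseq; case: ifP => //; lia.
Qed.

Lemma zee_gt0 nu : is_partition nu -> 0 < zee nu.
Proof.
case/andP=> _ /allP pnu; rewrite /zee big_seq_cond; apply: prodn_cond_gt0 => i.
rewrite andbT mem_undup => /pnu ip; rewrite muln_gt0 expn_gt0 ip fact_gt0.
by [].
Qed.

Local Open Scope ring_scope.

Lemma natQa n : (0 < n)%N -> (n%:R : Qa) != 0.
Proof.
move=> hn.
have -> : (n%:R : Qa) = tofrac (n%:R : {poly rat}) by rewrite rmorph_nat.
by rewrite tofrac_eq0 -polyC_natr polyC_eq0 pnatr_eq0 -lt0n.
Qed.

Lemma aux_field (F : fieldType) (t C f L z : F) : f != 0 -> z != 0 ->
  t * (C * f * L) / f = L / z * (C * z * t).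
Proof. by move=> hf hz; field; rewrite hf hz. Qed.

Lemma part1 theta k mu lam : is_partition mu -> sumn mu = k -> is_partition lam ->
  Ko theta mu lam =
    \sum_(nu <- partitions k) (Lc nu mu)%:R / (zee nu)%:R * Ch theta nu lam.
Proof.
move=> pmu smu plam.
rewrite /Ko /Ch smu.
set n := sumn lam.
transitivity (\sum_(nu <- partitions k) (Lc nu mu)%:R / (zee nu)%:R *
   (if (k <= n)%N then ('C(n - k + mult 1 nu, mult 1 nu))%:R * (zee nu)%:R
      * theta lam (add_ones nu (n - k)) else 0)); last first.
  by apply: eq_big_seq => nu; rewrite mem_partitions => /andP[_ /eqP ->].
case: (leqP k n) => hkn; last by rewrite big1_seq // => nu _; rewrite mulr0.
set j := (n - k)%N.
have hn : n = (k + j)%N by rewrite subnKC.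
rewrite /Khat -/n (bigID (fun rho => j <= count_mem 1 rho)%N) /=.
rewrite [X in _ + X]big1_seq ?addr0; last first.
  move=> rho /andP[hc]; rewrite mem_partitions => /andP[prho _].
  by rewrite Lc_add_ones0 ?mulr0 // ltnNge.
rewrite -big_filter.
have -> : partitions n = partitions (k + j) by rewrite -hn.
rewrite (perm_big _ (perm_parts k j)) big_map mulr_suml.
apply: eq_big_seq => nu; rewrite mem_partitions => /andP[pnu /eqP snu].
rewrite Lc_add_ones //.
have -> : (count_mem 1 nu + j) ^_ j = ('C(j + mult 1 nu, mult 1 nu) * j`!)%N.
  rewrite /mult [X in 'C(_, X)](esym (addKn j (count_mem 1 nu))) bin_sub ?leq_addr //.
  by rewrite bin_ffact addnC.
rewrite !natrM; apply: aux_field; by rewrite natQa ?fact_gt0 ?zee_gt0.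
Qed.

Lemma ss_ext (G H : seq nat -> Qa) :
  (forall lam, is_partition lam -> G lam = H lam) ->
  shifted_symmetric H -> shifted_symmetric G.
Proof.
move=> e [F [hd hs hst he]]; exists F; split=> // lam pl.
by rewrite e // he.
Qed.

Lemma ss_zero : shifted_symmetric (fun _ => 0).
Proof.
exists (fun _ _ => 0); split=> //.
exists 0%N => N _; exists [::]; split=> // x _.
by rewrite big_nil.
Qed.

Lemma ss_lin (G1 G2 : seq nat -> Qa) c :
  shifted_symmetric G1 -> shifted_symmetric G2 ->
  shifted_symmetric (fun lam => G1 lam + c * G2 lam).
Proof.
move=> [F1 [[d1 hd1] hs1 hst1 he1]] [F2 [[d2 hd2] hs2 hst2 he2]].
exists (fun N x => F1 N x + c * F2 N x); split.
- exists (maxn d1 d2) => N hN.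
  have [t1 [b1 e1]] := hd1 N hN; have [t2 [b2 e2]] := hd2 N hN.
  exists (t1 ++ map (fun t => (c * t.1, t.2)) t2); split.
    move=> t; rewrite mem_cat => /orP[/b1 h|/mapP[u /b2 h ->]].
      by apply: leq_trans h (leq_maxl _ _).
    by apply: leq_trans h (leq_maxr _ _).
  move=> x sx; rewrite big_cat big_map /= e1 // e2 // mulr_sumr.
  by congr (_ + _); apply: eq_bigr => t _; rewrite mulrA.
- by move=> N s x hN sx; rewrite hs1 // hs2.
- by move=> N x hN sx; rewrite hst1 // hst2.
- by move=> lam pl; rewrite he1 // he2.
Qed.

Lemma ss_sum (s : seq (seq nat)) (c : seq nat -> Qa) (G : seq nat -> seq nat -> Qa) :
  (forall nu, nu \in s -> shifted_symmetric (G nu)) ->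
  shifted_symmetric (fun lam => \sum_(nu <- s) c nu * G nu lam).
Proof.
elim: s => [|x s IH] h.
  by apply: ss_ext ss_zero => lam _; rewrite big_nil.
apply: (ss_ext (H := fun lam => \sum_(nu <- s) c nu * G nu lam + c x * G x lam)).
  by move=> lam _; rewrite big_cons addrC.
apply: ss_lin; last by apply: h; rewrite mem_head.
by apply: IH => nu hnu; apply: h; rewrite inE hnu orbT.
Qed.

Unset Implicit Arguments.

Theorem proposition2p3 (theta : seq nat -> seq nat -> Qa) (Hjack : IsJack theta)
    (k : nat) (mu : seq nat) (Hmu : is_partition mu) (Hk : sumn mu = k) :
  (forall lam : seq nat, is_partition lam ->
     Ko theta mu lam =
       \sum_(nu <- partitions k) (Lc nu mu)%:R / (zee nu)%:R * Ch theta nu lam)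
  /\ ((forall nu : seq nat, is_partition nu -> shifted_symmetric (Ch theta nu)) ->
      shifted_symmetric (Ko theta mu)).
Proof.
split; first by move=> lam pl; apply: part1.
move=> hCh.
apply: (ss_ext (H := fun lam => \sum_(nu <- partitions k)
   (Lc nu mu)%:R / (zee nu)%:R * Ch theta nu lam)).
  by move=> lam pl; apply: part1.
apply: ss_sum => nu; rewrite mem_partitions => /andP[pnu _]; exact: hCh.
Qed.
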